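(* Let $\ket{\psi_1},\dots,\ket{\psi_d}\in\mathbb{C}^d\otimes\mathbb{C}^d$ be $d$ pairwise orthogonal maximally entangled states shared between Alice and Bob, each with probability $1/d$. Suppose Alice performs a measurement with Kraus operators $\{K_j\}$ and obtains outcome $\alpha$, producing post-measurement states $\ket{\psi_{i,\alpha}}=(K_\alpha\otimes\mathbb{1}_B)\ket{\psi_i}/\|(K_\alpha\otimes\mathbb{1}_B)\ket{\psi_i}\|$, and let $\rho^{(B)}_{\alpha}=\frac1d\sum_{i=1}^d\mathrm{Tr}_A\ket{\psi_{i,\alpha}}\bra{\psi_{i,\alpha}}$. If the states $\{\ket{\psi_{i,\alpha}}\}_{i=1}^d$ are perfectly distinguishable by LOCC, then $\rho^{(B)}_{\alpha}=\frac1d\mathbb{1}_d$ (maximally mixed).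
   Context: A maximally entangled state in $\mathbb{C}^d\otimes\mathbb{C}^d$ is a pure state whose reduced states are $\frac1d\mathbb{1}_d$. LOCC denotes local operations and classical communication between Alice and Bob. *)

(* Defs.v *)
(* Bipartite pure states on C^da (x) C^db are column vectors
   'cV_(da * db), the tensor (Kronecker) product being mathcomp-real-closed's
   [tensmx] (notation [A *t B]) with its index convention [mxtens_index]. *)
From HB Require Import structures.
From mathcomp Require Import all_boot all_order all_algebra.
From mathcomp Require Export mxtens.
Set Implicit Arguments. Unset Strict Implicit. Unset Printing Implicit Defensive.
Import Order.TTheory GRing.Theory Num.Theory.
Local Open Scope ring_scope.

Section QDefs.
Variable C : numClosedFieldType.

Definition adjmx {m n} (A : 'M[C]_(m, n)) : 'M[C]_(n, m) := (map_mx Num.conj A)^T.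

Definition inner {n} (u v : 'cV[C]_n) : C := (adjmx u *m v) 0 0.
Definition vnorm {n} (v : 'cV[C]_n) : C := sqrtC (inner v v).

Definition ketbra {n} (v : 'cV[C]_n) : 'M[C]_n := v *m adjmx v.

Definition ptraceA {da db} (rho : 'M[C]_(da * db)) : 'M[C]_db :=
  \matrix_(b, b') \sum_(a < da) rho (mxtens_index (a, b)) (mxtens_index (a, b')).
Definition ptraceB {da db} (rho : 'M[C]_(da * db)) : 'M[C]_da :=
  \matrix_(a, a') \sum_(b < db) rho (mxtens_index (a, b)) (mxtens_index (a', b)).

Definition max_entangled d (psi : 'cV[C]_(d * d)) : Prop :=
  ptraceA (ketbra psi) = (d%:R)^-1 *: 1%:M /\
  ptraceB (ketbra psi) = (d%:R)^-1 *: 1%:M.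

Definition kraus {m din dout} (K : 'I_m -> 'M[C]_(dout, din)) : Prop :=
  \sum_(j < m) adjmx (K j) *m K j = 1%:M.

(* Finite-round LOCC protocols for discriminating n states.  At each node one
   party (Alice or Bob) performs a local measurement with Kraus operators
   (possibly changing the dimension of its own system, e.g. adjoining an
   ancilla); the classical outcome is broadcast and the rest of the protocol
   may depend on it (tree structure). *)
Inductive locc (n : nat) : nat -> nat -> Type :=
| Guess da db (g : 'I_n) : locc n da db
| AliceM da db m da' (K : 'I_m -> 'M[C]_(da', da))
    (next : 'I_m -> locc n da' db) : locc n da db
| BobM da db m db' (L : 'I_m -> 'M[C]_(db', db))
    (next : 'I_m -> locc n da db') : locc n da db.

Fixpoint locc_valid n da db (P : locc n da db) : Prop :=
  match P with
  | Guess _ _ _ => True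
  | AliceM _ _ _ _ K next => kraus K /\ forall k, locc_valid (next k)
  | BobM _ _ _ _ L next => kraus L /\ forall k, locc_valid (next k)
  end.

(* [locc_identifies P i v]: running P on the (unnormalised) state v, every
   branch reached with nonzero probability ends with the guess i. *)
Fixpoint locc_identifies n da db (P : locc n da db) (i : 'I_n)
  : 'cV[C]_(da * db) -> Prop :=
  match P in locc _ da db return 'cV[C]_(da * db) -> Prop with
  | Guess _ _ g => fun v => v = 0 \/ g = i
  | AliceM _ db _ _ K next => fun v =>
      forall k, locc_identifies (next k) i ((K k *t (1%:M : 'M[C]_db)) *m v)
  | BobM da _ _ _ L next => fun v =>
      forall k, locc_identifies (next k) i (((1%:M : 'M[C]_da) *t L k) *m v)
  end.

Definition locc_distinguishable n da db (phi : 'I_n -> 'cV[C]_(da * db)) : Prop :=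
  exists P : locc n da db, locc_valid P /\ forall i, locc_identifies P i (phi i).

End QDefs.

(* Main.v *)
Require Import Defs.
From HB Require Import structures.
From mathcomp Require Import all_boot all_order all_algebra.
From mathcomp Require Import mxtens ring.
Import Order.TTheory GRing.Theory Num.Theory.
Set Implicit Arguments. Unset Strict Implicit. Unset Printing Implicit Defensive.
Local Open Scope ring_scope.

Section Aux.
Variable C : numClosedFieldType.

Lemma adjmxM m n p (X : 'M[C]_(m,n)) (W : 'M_(n,p)) :
  adjmx (X *m W) = adjmx W *m adjmx X.
Proof. by rewrite /adjmx map_mxM trmx_mul. Qed.

Lemma adjmx_tr m n (X : 'M[C]_(m,n)) : adjmx (X^T) = (adjmx X)^T.
Proof. by apply/matrixP=> i j; rewrite !mxE. Qed.

Lemma adjmx0 m n : adjmx (0 : 'M[C]_(m,n)) = 0.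
Proof. by rewrite /adjmx map_mx0 trmx0. Qed.

Lemma adjmxE m n (X : 'M[C]_(m,n)) i j : adjmx X i j = (X j i)^*.
Proof. by rewrite !mxE. Qed.

Lemma sum_tens m n (F : 'I_(m*n) -> C) :
  \sum_k F k = \sum_a \sum_b F (mxtens_index (a,b)).
Proof.
rewrite pair_big /=.
rewrite (reindex (@mxtens_index m n)) /=; last first.
  by exists (@mxtens_unindex m n) => x _; rewrite (mxtens_indexK, mxtens_unindexK).
by apply: eq_bigr => -[a b].
Qed.

Definition cf m n (x : 'cV[C]_(m*n)) : 'M[C]_(m,n) :=
  \matrix_(a,b) x (mxtens_index (a,b)) 0.

Lemma cf0 m n : cf (0 : 'cV[C]_(m*n)) = 0.
Proof. by apply/matrixP=> a b; rewrite !mxE. Qed.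

Lemma cf_mul da db m n (A : 'M[C]_(da,m)) (B : 'M[C]_(db,n)) (x : 'cV_(m*n)) :
  cf ((A *t B) *m x) = A *m cf x *m B^T.
Proof.
apply/matrixP=> r s; rewrite !mxE sum_tens.
rewrite exchange_big /=; apply: eq_bigr => b _.
rewrite !mxE mulr_suml; apply: eq_bigr => a _.
by rewrite tensmxE !mxE mulrAC.
Qed.

Lemma inner_cf m n (u v : 'cV[C]_(m*n)) :
  inner u v = \tr (adjmx (cf u) *m cf v).
Proof.
rewrite /inner /mxtrace !mxE sum_tens exchange_big /=.
apply: eq_bigr => b _; rewrite !mxE; apply: eq_bigr => a _.
by rewrite !mxE.
Qed.


Lemma core_eq p q s (Gm : 'M[C]_(p,q)) (H : 'M[C]_(q,s)) :
  (forall r t a b, Gm r a * (H b t)^* = Gm r b * (H a t)^*) ->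
  H *m adjmx H *m (adjmx Gm *m Gm) = \tr (adjmx Gm *m Gm) *: (H *m adjmx H).
Proof.
move=> E; apply/matrixP=> x y; rewrite !mxE /mxtrace mulr_suml.
apply: eq_bigr => k _; rewrite !mxE !big_distrlr [RHS]exchange_big /=.
apply: eq_bigr => t _; apply: eq_bigr => r _.
rewrite !adjmxE.
transitivity (H x t * (Gm r k)^* * (Gm r y * (H k t)^*)); first by ring.
by rewrite E; ring.
Qed.

Definition sum4 q p s (F : 'I_q -> 'I_q -> 'I_p -> 'I_s -> C) :=
  \sum_a \sum_b \sum_r \sum_t F a b r t.

Lemma sum4D q p s (F G : 'I_q -> 'I_q -> 'I_p -> 'I_s -> C) :
  sum4 F + sum4 G = sum4 (fun a b r t => F a b r t + G a b r t).
Proof.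
rewrite /sum4 -big_split; apply: eq_bigr => a _.
rewrite -big_split; apply: eq_bigr => b _.
rewrite -big_split; apply: eq_bigr => r _.
by rewrite -big_split.
Qed.

Lemma sum4N q p s (F : 'I_q -> 'I_q -> 'I_p -> 'I_s -> C) :
  - sum4 F = sum4 (fun a b r t => - F a b r t).
Proof.
rewrite /sum4 -sumrN; apply: eq_bigr => a _.
rewrite -sumrN; apply: eq_bigr => b _.
rewrite -sumrN; apply: eq_bigr => r _.
by rewrite -sumrN.
Qed.

Lemma sum4_swap q p s (F : 'I_q -> 'I_q -> 'I_p -> 'I_s -> C) :
  sum4 F = sum4 (fun a b r t => F b a r t).
Proof. rewrite /sum4; exact: exchange_big. Qed.

Lemma core_ineq p q s (Gm : 'M[C]_(p,q)) (H : 'M[C]_(q,s)) :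
  (\tr (adjmx Gm *m Gm) * \tr (H *m adjmx H)
     - \tr (H *m adjmx H *m (adjmx Gm *m Gm))) *+ 2 =
  sum4 (fun a b r t => (Gm r a * (H b t)^* - Gm r b * (H a t)^*) *
                       (Gm r a * (H b t)^* - Gm r b * (H a t)^*)^*).
Proof.
have h1 : \tr (adjmx Gm *m Gm) * \tr (H *m adjmx H) =
   sum4 (fun a b r t => ((Gm r a)^* * Gm r a) * (H b t * (H b t)^*)).
  rewrite /sum4 /mxtrace mulr_suml; apply: eq_bigr => a _.
  rewrite !mxE mulr_sumr; apply: eq_bigr => b _.
  rewrite !mxE mulr_suml; apply: eq_bigr => r _.
  rewrite !mxE mulr_sumr; apply: eq_bigr => t _.
  by rewrite !mxE.
have h2 : \tr (H *m adjmx H *m (adjmx Gm *m Gm)) =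
   sum4 (fun a b r t => (H a t * (H b t)^*) * ((Gm r b)^* * Gm r a)).
  rewrite /sum4 /mxtrace; apply: eq_bigr => a _.
  rewrite !mxE; apply: eq_bigr => b _.
  rewrite !mxE mulr_suml exchange_big /=; apply: eq_bigr => r _.
  rewrite !mxE mulr_sumr; apply: eq_bigr => t _.
  by rewrite !mxE.
rewrite (_ : forall x y : C, (x - y) *+ 2 = x + x + (- y + - y)); last first.
  by move=> x y; rewrite mulr2n; ring.
rewrite h1 h2 [X in _ + X + _]sum4_swap [X in _ + (_ + - X)]sum4_swap.
rewrite !sum4N !sum4D /sum4.
apply: eq_bigr => a _; apply: eq_bigr => b _; apply: eq_bigr => r _.
apply: eq_bigr => t _.
rewrite rmorphB /= !rmorphM /= !conjCK; ring.
Qed.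




Lemma tr_sum k (I : finType) (A_ : I -> 'M[C]_k) :
  \sum_i \tr (A_ i) = \tr (\sum_i A_ i).
Proof. by rewrite raddf_sum. Qed.

Lemma trmx_sum m n (I : finType) (A_ : I -> 'M[C]_(m,n)) :
  (\sum_i A_ i)^T = \sum_i (A_ i)^T.
Proof. by rewrite raddf_sum. Qed.

Section FG.
Variables (d0 n : nat) (Y : 'I_n -> 'M[C]_d0) (c : C).

Definition F da db (A : 'M[C]_(da,d0)) (B : 'M[C]_(db,d0)) (Z : 'M[C]_d0) :=
  \sum_i \tr (adjmx (A *m Y i *m B^T) *m (A *m Y i *m Z^T *m B^T)).
Definition G da db (A : 'M[C]_(da,d0)) (B : 'M[C]_(db,d0)) (Z : 'M[C]_d0) :=
  c * \tr (adjmx A *m A) * \tr (adjmx B *m B *m Z).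

Lemma F_alice da db m da' (K : 'I_m -> 'M[C]_(da', da)) (A : 'M[C]_(da,d0)) (B : 'M[C]_(db,d0)) (Z : 'M[C]_d0) :
  kraus K -> \sum_k F (K k *m A) B Z = F A B Z.
Proof.
rewrite /kraus /F => HK; rewrite exchange_big; apply: eq_bigr => i _ /=.
set V := A *m Y i *m B^T; set W := A *m Y i *m Z^T *m B^T.
have e : forall k, \tr (adjmx (K k *m A *m Y i *m B^T) *m (K k *m A *m Y i *m Z^T *m B^T))
   = \tr (adjmx V *m (adjmx (K k) *m K k) *m W).
  move=> k; rewrite (_ : K k *m A *m Y i *m B^T = K k *m V); last by rewrite !mulmxA.
  rewrite (_ : K k *m A *m Y i *m Z^T *m B^T = K k *m W); last by rewrite !mulmxA.
  by rewrite adjmxM !mulmxA.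
under eq_bigr do rewrite e.
by rewrite tr_sum -mulmx_suml -mulmx_sumr HK mulmx1.
Qed.

Lemma F_bob da db m db' (L : 'I_m -> 'M[C]_(db', db)) (A : 'M[C]_(da,d0)) (B : 'M[C]_(db,d0)) (Z : 'M[C]_d0) :
  kraus L -> \sum_k F A (L k *m B) Z = F A B Z.
Proof.
rewrite /kraus /F => HK; rewrite exchange_big; apply: eq_bigr => i _ /=.
set V := A *m Y i *m B^T; set W := A *m Y i *m Z^T *m B^T.
have e : forall k, \tr (adjmx (A *m Y i *m (L k *m B)^T) *m (A *m Y i *m Z^T *m (L k *m B)^T))
   = \tr (adjmx V *m W *m (adjmx (L k) *m L k)^T).
  move=> k; rewrite !trmx_mul.
  rewrite (_ : A *m Y i *m (B^T *m (L k)^T) = V *m (L k)^T); last by rewrite !mulmxA.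
  rewrite (_ : A *m Y i *m Z^T *m (B^T *m (L k)^T) = W *m (L k)^T); last by rewrite !mulmxA.
  rewrite adjmxM -mulmxA mxtrace_mulC !mulmxA.
  by rewrite adjmx_tr.
under eq_bigr do rewrite e.
by rewrite tr_sum -mulmx_sumr -trmx_sum HK trmx1 mulmx1.
Qed.

Lemma G_alice da db m da' (K : 'I_m -> 'M[C]_(da', da)) (A : 'M[C]_(da,d0)) (B : 'M[C]_(db,d0)) (Z : 'M[C]_d0) :
  kraus K -> \sum_k G (K k *m A) B Z = G A B Z.
Proof.
rewrite /kraus /G => HK; rewrite -mulr_suml -mulr_sumr; congr (_ * _ * _).
have e : forall k, \tr (adjmx (K k *m A) *m (K k *m A)) =
   \tr (adjmx A *m (adjmx (K k) *m K k) *m A).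
  by move=> k; rewrite adjmxM !mulmxA.
under eq_bigr do rewrite e.
by rewrite tr_sum -mulmx_suml -mulmx_sumr HK mulmx1.
Qed.

Lemma G_bob da db m db' (L : 'I_m -> 'M[C]_(db', db)) (A : 'M[C]_(da,d0)) (B : 'M[C]_(db,d0)) (Z : 'M[C]_d0) :
  kraus L -> \sum_k G A (L k *m B) Z = G A B Z.
Proof.
rewrite /kraus /G => HK; rewrite -mulr_sumr; congr (_ * _).
have e : forall k, \tr (adjmx (L k *m B) *m (L k *m B) *m Z) =
   \tr (adjmx B *m (adjmx (L k) *m L k) *m B *m Z).
  by move=> k; rewrite adjmxM !mulmxA.
under eq_bigr do rewrite e.
by rewrite tr_sum -mulmx_suml -mulmx_suml -mulmx_sumr HK mulmx1.
Qed.


Hypothesis hY : forall i, Y i *m adjmx (Y i) = c *: 1%:M.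

Lemma sum4_ge0 q p s (f : 'I_q -> 'I_q -> 'I_p -> 'I_s -> C) :
  (forall a b r t, 0 <= f a b r t) -> 0 <= sum4 f.
Proof.
move=> h; rewrite /sum4; apply: sumr_ge0 => a _; apply: sumr_ge0 => b _.
by apply: sumr_ge0 => r _; apply: sumr_ge0 => t _.
Qed.

Lemma sum4_eq0 q p s (f : 'I_q -> 'I_q -> 'I_p -> 'I_s -> C) :
  (forall a b r t, 0 <= f a b r t) -> sum4 f = 0 -> forall a b r t, f a b r t = 0.
Proof.
move=> h e a b r t; rewrite /sum4 in e.
have g3 : forall a b r, 0 <= \sum_t f a b r t by move=> *; apply: sumr_ge0.
have g2 : forall a b, 0 <= \sum_r \sum_t f a b r t by move=> *; apply: sumr_ge0.
have g1 : forall a, 0 <= \sum_b \sum_r \sum_t f a b r t by move=> *; apply: sumr_ge0.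
have e1 := psumr_eq0P (fun a _ => g1 a) e (i:=a) isT.
have e2 := psumr_eq0P (fun b _ => g2 a b) e1 (i:=b) isT.
have e3 := psumr_eq0P (fun r _ => g3 a b r) e2 (i:=r) isT.
exact: (psumr_eq0P (fun t _ => h a b r t) e3 (i:=t) isT).
Qed.

Lemma leaf da db (A : 'M[C]_(da,d0)) (B : 'M[C]_(db,d0)) (g : 'I_n) :
  (forall i, A *m Y i *m B^T = 0 \/ g = i) ->
  F A B 1%:M <= G A B 1%:M /\
  (F A B 1%:M = G A B 1%:M -> forall Z, F A B Z = G A B Z).
Proof.
move=> hAB.
have eF : forall Z, F A B Z =
    \tr (adjmx (A *m Y g *m B^T) *m (A *m Y g *m Z^T *m B^T)).
  move=> Z; rewrite /F (bigD1 g) //= big1 ?addr0 // => i ne.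
  case: (hAB i) => [e|e]; last by rewrite e eqxx in ne.
  by rewrite e adjmx0 mul0mx mxtrace0.
set Gm := A *m Y g; set Hm := B^T.
have eF2 : forall Z, F A B Z = \tr (Z^T *m (Hm *m adjmx Hm *m (adjmx Gm *m Gm))).
  move=> Z; rewrite eF adjmxM !mulmxA mxtrace_mulC !mulmxA mxtrace_mulC !mulmxA.
  done.
have eG : forall Z, G A B Z = \tr (adjmx Gm *m Gm) * \tr (Z^T *m (Hm *m adjmx Hm)).
  move=> Z; rewrite /G; congr (_ * _).
    rewrite /Gm adjmxM !mulmxA [RHS]mxtrace_mulC !mulmxA hY -!scalemxAl mul1mx mxtraceZ.
    by [].
  by rewrite -[LHS]mxtrace_tr !trmx_mul -adjmx_tr mulmxA.
have hd := core_ineq Gm Hm.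
split.
  rewrite eF2 eG trmx1 !mul1mx -subr_ge0 -(pmulrn_lge0 _ (isT : 0 < 2)%N) hd.
  by apply: sum4_ge0 => *; exact: mul_conjC_ge0.
rewrite eF2 eG trmx1 !mul1mx => e Z.
have hz := hd; rewrite e subrr mul0rn in hz.
have h0 := sum4_eq0 (fun a b r t => mul_conjC_ge0 _) (esym hz).
have E : forall r t a b, Gm r a * (Hm b t)^* = Gm r b * (Hm a t)^*.
  move=> r t a b; apply/eqP; rewrite -subr_eq0 -mul_conjC_eq0; apply/eqP.
  apply: h0.
by rewrite eF2 eG (core_eq E) -scalemxAr mxtraceZ.
Qed.


Lemma combine m (f g : 'I_m -> 'M[C]_d0 -> C) (F0 G0 : 'M[C]_d0 -> C) :
  (forall Z, F0 Z = \sum_k f k Z) -> (forall Z, G0 Z = \sum_k g k Z) ->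
  (forall k, f k 1%:M <= g k 1%:M /\ (f k 1%:M = g k 1%:M -> forall Z, f k Z = g k Z)) ->
  F0 1%:M <= G0 1%:M /\ (F0 1%:M = G0 1%:M -> forall Z, F0 Z = G0 Z).
Proof.
move=> eF eG h; rewrite eF eG; split.
  by apply: ler_sum => k _; case: (h k).
move=> e Z; rewrite eF eG; apply: eq_bigr => k _; case: (h k) => h1 h2; apply: h2.
have e0 : \sum_k (g k 1%:M - f k 1%:M) = 0 by rewrite sumrB e subrr.
have ge : forall k, 0 <= g k 1%:M - f k 1%:M.
  by move=> k'; rewrite subr_ge0; case: (h k').
have := psumr_eq0P (fun k _ => ge k) e0 (i:=k) isT.
by move/eqP; rewrite subr_eq0 => /eqP ->.
Qed.


Variable psi : 'I_n -> 'cV[C]_(d0 * d0).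
Hypothesis hpsi : forall i, cf (psi i) = Y i.

Lemma tree da db (P : locc C n da db) : locc_valid P ->
  forall (A : 'M[C]_(da,d0)) (B : 'M[C]_(db,d0)),
  (forall i, locc_identifies P i ((A *t B) *m psi i)) ->
  F A B 1%:M <= G A B 1%:M /\
  (F A B 1%:M = G A B 1%:M -> forall Z, F A B Z = G A B Z).
Proof.
elim: P => [da' db' g | da' db' m da'' K next IH | da' db' m db'' L next IH] /=.
- move=> _ A B hid; apply: (leaf (A:=A) (B:=B) (g:=g)) => i.
  case: (hid i) => [e|->]; last by right.
  by left; rewrite -hpsi -cf_mul e cf0.
- move=> [HK Hn] A B hid.
  apply: (combine (f := fun k Z => F (K k *m A) B Z) (g := fun k Z => G (K k *m A) B Z)).
  + by move=> Z; rewrite (F_alice _ _ _ HK).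
  + by move=> Z; rewrite (G_alice _ _ _ HK).
  move=> k; apply: (IH k (Hn k)) => i.
  by have := hid i k; rewrite mulmxA tensmx_mul mul1mx.
- move=> [HK Hn] A B hid.
  apply: (combine (f := fun k Z => F A (L k *m B) Z) (g := fun k Z => G A (L k *m B) Z)).
  + by move=> Z; rewrite (F_bob _ _ _ HK).
  + by move=> Z; rewrite (G_bob _ _ _ HK).
  move=> k; apply: (IH k (Hn k)) => i.
  by have := hid i k; rewrite mulmxA tensmx_mul mul1mx.
Qed.

End FG.
End Aux.

Section Aux2.
Variable C : numClosedFieldType.

Lemma ptraceB_ketbra m n (x : 'cV[C]_(m*n)) :
  ptraceB (ketbra x) = cf x *m adjmx (cf x).
Proof.
apply/matrixP=> a a'; rewrite !mxE; apply: eq_bigr => b _.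
by rewrite !mxE big_ord1 !mxE.
Qed.

Lemma ptraceA_ketbra m n (x : 'cV[C]_(m*n)) :
  ptraceA (ketbra x) = (cf x)^T *m (adjmx (cf x))^T.
Proof.
apply/matrixP=> b b'; rewrite !mxE; apply: eq_bigr => a _.
by rewrite !mxE big_ord1 !mxE.
Qed.

Lemma cfZ m n s (x : 'cV[C]_(m*n)) : cf (s *: x) = s *: cf x.
Proof. by apply/matrixP=> a b; rewrite !mxE. Qed.

Lemma adjmxZ m n s (X : 'M[C]_(m,n)) : adjmx (s *: X) = s^* *: adjmx X.
Proof. by apply/matrixP=> a b; rewrite !mxE rmorphM. Qed.

Lemma adjmx1 m : adjmx (1%:M : 'M[C]_m) = 1%:M.
Proof. by apply/matrixP=> a b; rewrite !mxE rmorphMn rmorph1 eq_sym. Qed.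

Lemma ident_scale n da db (P : locc C n da db) i x s :
  locc_identifies P i x -> locc_identifies P i (s *: x).
Proof.
elim: P x => [da' db' g | da' db' m da'' K next IH | da' db' m db'' L next IH] x /=.
- by case=> [->|->]; [left; rewrite scaler0 | right].
- by move=> h k; rewrite -scalemxAr; apply: IH.
- by move=> h k; rewrite -scalemxAr; apply: IH.
Qed.

Lemma tr_delta m (S : 'M[C]_m) i j : \tr (S *m delta_mx j i) = S i j.
Proof.
rewrite /mxtrace (bigD1 i) //= big1 ?addr0 => [|k nk]; rewrite !mxE.
  rewrite (bigD1 j) //= big1 ?addr0 => [|l nl]; first by rewrite !mxE !eqxx mulr1.
  by rewrite !mxE (negbTE nl) mulr0.
by apply: big1 => l _; rewrite !mxE (negbTE nk) andbF mulr0.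
Qed.

End Aux2.

Unset Implicit Arguments.
Set Strict Implicit.

Theorem corollary1 (C : numClosedFieldType) (d : nat)
  (psi : 'I_d -> 'cV[C]_(d * d))
  (Hme : forall i, max_entangled (psi i))
  (Horth : forall i j, i != j -> inner (psi i) (psi j) = 0)
  (m : nat) (K : 'I_m -> 'M[C]_d) (HK : kraus K)
  (alpha : 'I_m) (Halpha : K alpha != 0) :
  let psi_a := fun i : 'I_d =>
    (vnorm ((K alpha *t (1%:M : 'M[C]_d)) *m psi i))^-1 *:
      ((K alpha *t (1%:M : 'M[C]_d)) *m psi i) in
  let rhoB := (d%:R)^-1 *: \sum_(i < d) ptraceA (ketbra (psi_a i)) in
  locc_distinguishable psi_a ->
  rhoB = (d%:R)^-1 *: 1%:M.
Proof.
move=> psi_a rhoB [P [Hv Hid]].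
set Ka := K alpha.
set c : C := (d%:R)^-1.
pose Y i := cf (psi i).
have hY : forall i, Y i *m adjmx (Y i) = c *: 1%:M.
  by move=> i; rewrite /Y -ptraceB_ketbra (proj2 (Hme i)).
set t := \tr (adjmx Ka *m Ka).
have ein : forall i, \tr (adjmx (Ka *m Y i) *m (Ka *m Y i)) = c * t.
  move=> i; rewrite adjmxM !mulmxA [LHS]mxtrace_mulC !mulmxA hY.
  by rewrite -!scalemxAl mul1mx mxtraceZ.
have hv : forall i, cf ((Ka *t 1%:M) *m psi i) = Ka *m Y i.
  by move=> i; rewrite cf_mul trmx1 mulmx1.
have ge : forall a j, 0 <= (Ka a j)^* * Ka a j.
  by move=> a j; rewrite mulrC mul_conjC_ge0.
have ht : t = \sum_j \sum_a (Ka a j)^* * Ka a j.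
  rewrite /t /mxtrace; apply: eq_bigr => j _; rewrite mxE.
  by apply: eq_bigr => a _; rewrite !mxE.
have tn0 : t != 0.
  apply: contra Halpha => /eqP t0; apply/eqP/matrixP => a b; rewrite mxE.
  rewrite ht in t0.
  have h2 := psumr_eq0P (fun j _ => sumr_ge0 _ (fun a _ => ge a j)) t0 (i:=b) isT.
  have := psumr_eq0P (fun a _ => ge a b) h2 (i:=a) isT.
  by move/eqP; rewrite mulrC mul_conjC_eq0 => /eqP.
have dn0 : d%:R != 0 :> C.
  rewrite pnatr_eq0; apply: contra tn0 => /eqP d0.
  by rewrite ht; apply/eqP; apply: big1 => -[j hj] _; exfalso; move: hj; by rewrite d0.
have cn0 : c != 0 by rewrite invr_eq0.
set x := c * t.
have xn0 : x != 0 by rewrite mulf_neq0.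
have xge0 : 0 <= x.
  rewrite /x mulr_ge0 // ?invr_ge0 ?ler0n // ht.
  by apply: sumr_ge0 => j _; apply: sumr_ge0.
have hn : forall i, vnorm ((Ka *t 1%:M) *m psi i) = sqrtC x.
  by move=> i; rewrite /vnorm inner_cf hv ein.
have hid : forall i, locc_identifies P i ((Ka *t 1%:M) *m psi i).
  move=> i; have := ident_scale (vnorm ((Ka *t 1%:M) *m psi i)) (Hid i).
  rewrite /psi_a scalerA mulfV ?scale1r // hn sqrtC_eq0 //.
have [hle heq] := tree hY (psi:=psi) (fun i => erefl) Hv hid.
have eFG : F Y Ka 1%:M 1%:M = G c Ka 1%:M 1%:M.
  rewrite /F /G trmx1 !mulmx1 adjmx1 mxtrace1 -/t.
  under eq_bigr do rewrite !mulmx1 ein.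
  by rewrite sumr_const card_ord mulr_natr.
have hZ := heq eFG.
set S := \sum_i adjmx (Ka *m Y i) *m (Ka *m Y i).
have hF : forall Z, F Y Ka 1%:M Z = \tr (S *m Z^T).
  move=> Z; rewrite /F /S mulmx_suml -tr_sum; apply: eq_bigr => i _.
  by rewrite trmx1 !mulmx1 mulmxA.
have hG : forall Z, G c Ka 1%:M Z = x * \tr Z.
  by move=> Z; rewrite /G adjmx1 !mul1mx.
have hS : S = x *: 1%:M.
  apply/matrixP => a b; rewrite -tr_delta.
  have := hZ (delta_mx b a)^T; rewrite hF hG trmxK => ->.
  rewrite mxtrace_tr -[delta_mx b a]mul1mx tr_delta.
  by rewrite [RHS]mxE.
rewrite /rhoB; congr (_ *: _).
have e : forall i, ptraceA (ketbra (psi_a i)) =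
    x^-1 *: (adjmx (Ka *m Y i) *m (Ka *m Y i))^T.
  move=> i; rewrite ptraceA_ketbra /psi_a cfZ hv adjmxZ hn.
  rewrite !linearZ /= -scalemxAl scalerA [in RHS]trmx_mul.
  congr (_ *: _).
  rewrite fmorphV /= (geC0_conj (_ : 0 <= sqrtC x)) ?sqrtC_ge0 //.
  by rewrite -invfM -expr2 sqrtCK.
under eq_bigr do rewrite e.
by rewrite -scaler_sumr -trmx_sum -/S hS linearZ /= trmx1 scalerA mulVf ?scale1r.
Qed.
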